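(* Let $p\in(1,\infty)$, $q=p/(p-1)$, $R_0\in\mathbb{R}^{\mathcal{S}\times\mathcal{A}}$, $\alpha>0$ and $\mathcal{R}_p=\{R:\|R-R_0\|_p\le\alpha\}$. For every stationary policy $\pi\in\Pi$ and every $(s,a)\in\mathcal{S}\times\mathcal{A}$, $$Q^\pi_{\mathcal{R}_p}(s,a)=R_0(s,a)+\gamma\sum_{s'}P(s'|s,a)\,v^\pi_{\mathcal{R}_p}(s')-\alpha\left(\frac{d^\pi(s,a)}{\|d^\pi\|_q}\right)^{q-1}.$$
   Context: Finite MDP with finite state space $\mathcal{S}$, finite action space $\mathcal{A}$, transition kernel $P$, discount $\gamma\in[0,1)$, initial distribution $\mu$ with $\mu(s)>0$ for all $s$. $\Pi$: stationary randomized policies, $\pi_s(a)=\pi(a|s)$; $R^\pi(s)=\sum_a\pi_s(a)R(s,a)$, $P^\pi(s'|s)=\sum_a\pi_s(a)P(s'|s,a)$; $v^\pi_R=(I-\gamma P^\pi)^{-1}R^\pi$ and $Q^\pi_R(s,a)=R(s,a)+\gamma\sum_{s'}P(s'|s,a)v^\pi_R(s')$. Occupancy: $d^\pi=\mu^\top(I-\gamma P^\pi)^{-1}$, $d^\pi(s,a)=d^\pi(s)\pi_s(a)$, $\|d^\pi\|_q$ the $L_q$ norm over $\mathcal{S}\times\mathcal{A}$. Return $\rho^\pi_R=\sum_{s,a}d^\pi(s,a)R(s,a)$. $R^\pi_p$ is the (unique) minimizer of $R\mapsto\rho^\pi_R$ over $\mathcal{R}_p$; $v^\pi_{\mathcal{R}_p}:=v^\pi_{R^\pi_p}$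 and $Q^\pi_{\mathcal{R}_p}:=Q^\pi_{R^\pi_p}$. *)

(* Defs.v *)
From HB Require Import structures.
From mathcomp Require Import all_boot all_order all_algebra.
From mathcomp Require Import all_classical all_reals exp.
Set Implicit Arguments. Unset Strict Implicit. Unset Printing Implicit Defensive.
Import Order.TTheory GRing.Theory Num.Theory.
Local Open Scope ring_scope.

(* Finite MDP: states 'I_n, actions 'I_m.
   Transition kernel P s a s' = P(s'|s,a); policy pi : 'M_(n,m), pi s a = pi(a|s);
   rewards R : 'M_(n,m); initial distribution mu : 'rV_n. *)

Definition Ppi (R : realType) (n m : nat) (P : 'I_n -> 'I_m -> 'I_n -> R)
  (pi : 'M[R]_(n, m)) : 'M[R]_n :=
  \matrix_(s, s') \sum_(a < m) pi s a * P s a s'.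

Definition Rpi (R : realType) (n m : nat) (pi Rw : 'M[R]_(n, m)) : 'cV[R]_n :=
  \col_s \sum_(a < m) pi s a * Rw s a.

Definition vpi (R : realType) (n m : nat) (P : 'I_n -> 'I_m -> 'I_n -> R)
  (gamma : R) (pi Rw : 'M[R]_(n, m)) : 'cV[R]_n :=
  invmx (1%:M - gamma *: Ppi P pi) *m Rpi pi Rw.

Definition Qpi (R : realType) (n m : nat) (P : 'I_n -> 'I_m -> 'I_n -> R)
  (gamma : R) (pi Rw : 'M[R]_(n, m)) (s : 'I_n) (a : 'I_m) : R :=
  Rw s a + gamma * \sum_(s' < n) P s a s' * vpi P gamma pi Rw s' 0.

Definition dS (R : realType) (n m : nat) (P : 'I_n -> 'I_m -> 'I_n -> R)
  (gamma : R) (mu : 'rV[R]_n) (pi : 'M[R]_(n, m)) : 'rV[R]_n :=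
  mu *m invmx (1%:M - gamma *: Ppi P pi).

Definition dSA (R : realType) (n m : nat) (P : 'I_n -> 'I_m -> 'I_n -> R)
  (gamma : R) (mu : 'rV[R]_n) (pi : 'M[R]_(n, m)) : 'M[R]_(n, m) :=
  \matrix_(s, a) (dS P gamma mu pi 0 s * pi s a).

Definition Lpnorm (R : realType) (n m : nat) (p : R) (f : 'M[R]_(n, m)) : R :=
  (\sum_(s < n) \sum_(a < m) `|f s a| `^ p) `^ p^-1.

Definition rho (R : realType) (n m : nat) (P : 'I_n -> 'I_m -> 'I_n -> R)
  (gamma : R) (mu : 'rV[R]_n) (pi Rw : 'M[R]_(n, m)) : R :=
  \sum_(s < n) \sum_(a < m) dSA P gamma mu pi s a * Rw s a.

Definition Rball (R : realType) (n m : nat) (p alpha : R) (R0 : 'M[R]_(n, m))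
  : set 'M[R]_(n, m) :=
  [set Rw | Lpnorm p (Rw - R0) <= alpha].

Definition is_worst_reward (R : realType) (n m : nat) (P : 'I_n -> 'I_m -> 'I_n -> R)
  (gamma : R) (mu : 'rV[R]_n) (pi : 'M[R]_(n, m)) (p alpha : R) (R0 : 'M[R]_(n, m))
  (Rw : 'M[R]_(n, m)) : Prop :=
  Rball p alpha R0 Rw /\
  forall Rw', Rball p alpha R0 Rw' -> rho P gamma mu pi Rw <= rho P gamma mu pi Rw'.

(* R^pi_p : the minimizer of R |-> rho^pi_R over R_p (chosen by xget; the
   default R0 is only used if no minimizer existed, which does not happen). *)
Definition Rworst (R : realType) (n m : nat) (P : 'I_n -> 'I_m -> 'I_n -> R)
  (gamma : R) (mu : 'rV[R]_n) (pi : 'M[R]_(n, m)) (p alpha : R) (R0 : 'M[R]_(n, m))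
  : 'M[R]_(n, m) :=
  xget R0 (is_worst_reward P gamma mu pi p alpha R0).

(* Main.v *)
From HB Require Import structures.
From mathcomp Require Import all_boot all_order all_algebra.
From mathcomp Require Import all_classical all_reals exp.
From mathcomp Require Import ring lra sequences.
Require Import Defs.
Import Order.TTheory GRing.Theory Num.Theory.
Local Open Scope ring_scope.

Section Aux.
Variable R : realType.

Lemma exp_conv (l u v : R) : 0 < l -> l < 1 ->
  expR (l*u + (1-l)*v) <= l * expR u + (1-l) * expR v /\
  (l * expR u + (1-l) * expR v <= expR (l*u + (1-l)*v) -> u = v).
Proof.
move=> l0 l1.
set m := l*u + (1-l)*v.
have em : forall w, expR w = expR m * expR (w - m).
  by move=> w; rewrite -expRD addrC subrK.
have E0 : 0 < expR m by apply: expR_gt0.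
have hu : expR m * (1 + (u - m)) <= expR u.
  by rewrite (em u) ler_pM2l // expR_ge1Dx.
have hv : expR m * (1 + (v - m)) <= expR v.
  by rewrite (em v) ler_pM2l // expR_ge1Dx.
have key : l * (expR m * (1 + (u - m))) + (1 - l) * (expR m * (1 + (v - m)))
   = expR m by rewrite /m; ring.
split.
  rewrite -{1}key; apply: lerD; rewrite ler_pM2l //; lra.
move=> hle; apply/eqP; apply/negPn/negP => huv.
have hum : u - m != 0.
  apply: contra huv => /eqP h.
  have : (1 - l) * (u - v) = 0 by rewrite -h /m; ring.
  move/eqP; rewrite mulf_eq0 subr_eq0 => /orP[/eqP h1|//]; lra.
have hu' : expR m * (1 + (u - m)) < expR u.
  by rewrite (em u) ltr_pM2l // expR_gt1Dx.
have : expR m < l * expR u + (1 - l) * expR v.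
  rewrite -{1}key; apply: ltr_leD; rewrite ?ltr_pM2l ?ler_pM2l //; lra.
lra.
Qed.


Lemma young_eq (p q x y : R) : 1 < p -> q = p / (p - 1) -> 0 <= x ->
  x * y <= x `^ q / q + `|y| `^ p / p /\
  (x `^ q / q + `|y| `^ p / p <= x * y -> y = x `^ (q - 1)).
Proof.
move=> p1 qE x0.
have p0 : 0 < p by lra.
have pm1 : p - 1 != 0 by rewrite subr_eq0 gt_eqF.
have q1 : 1 < q.
  by rewrite qE ltr_pdivlMr ?subr_gt0 //; lra.
have q0 : 0 < q by lra.
have qm1 : q - 1 = q / p by rewrite qE; field; rewrite pm1 gt_eqF.
move: x0; rewrite le_eqVlt => /predU1P[<-|x0'].
  rewrite mul0r powR0 ?gt_eqF // mul0r add0r.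
  have h3 : 0 <= `|y| `^ p / p by apply: divr_ge0; [exact: powR_ge0 | exact: ltW].
  split => // h.
  have : `|y| `^ p / p = 0 by lra.
  move/eqP; rewrite mulf_eq0 invr_eq0 (gt_eqF p0) orbF => /eqP.
  move/powR_eq0_eq0/normr0_eq0 => ->.
  by rewrite powR0 // subr_eq0 gt_eqF.
case: (ltgtP y 0) => [yneg|ypos|->].
  - have h1 : x * y < 0 by rewrite pmulr_rlt0.
    have h2 : 0 < x `^ q / q by rewrite divr_gt0 // powR_gt0.
    have h3 : 0 <= `|y| `^ p / p by apply: divr_ge0; [exact: powR_ge0 | exact: ltW].
    split; first lra.
    move=> h; lra.
  -
    set l := q^-1.
    have l0 : 0 < l by rewrite invr_gt0.
    have l1 : l < 1 by rewrite invf_lt1.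
    have lq : 1 - l = p^-1 by rewrite /l qE; field; rewrite pm1 gt_eqF.
    have [A B] := exp_conv l (q * ln x) (p * ln y) l0 l1.
    have ex : x `^ q = expR (q * ln x) by rewrite /powR gt_eqF.
    have ey : `|y| `^ p = expR (p * ln y) by rewrite gtr0_norm // /powR gt_eqF.
    have exy : x * y = expR (l * (q * ln x) + (1 - l) * (p * ln y)).
      rewrite lq /l mulrA mulVf ?gt_eqF // mulrA mulVf ?gt_eqF // !mul1r.
      by rewrite expRD !lnK.
    have e1 : x `^ q / q + `|y| `^ p / p = l * expR (q * ln x) + (1 - l) * expR (p * ln y).
      by rewrite ex ey lq /l mulrC [_ / p]mulrC.
    rewrite e1 exy; split => // h.
    have huv := B h.
    have hxy : x `^ q = `|y| `^ p by rewrite ex ey huv.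
    have -> : y = (`|y| `^ p) `^ p^-1.
      by rewrite -powRrM mulfV ?gt_eqF // powRr1 // gtr0_norm.
    by rewrite -hxy -powRrM qm1.
  - rewrite mulr0 normr0 powR0 ?gt_eqF // mul0r.
    have h2 : 0 < x `^ q / q by rewrite divr_gt0 // powR_gt0.
    split; first lra.
    move=> h; lra.
Qed.

End Aux.
Lemma Ppi_ge0 (R : realType) n m (P : 'I_n -> 'I_m -> 'I_n -> R) (pi : 'M[R]_(n, m))
  (hP0 : forall s a s', 0 <= P s a s') (hpi0 : forall s a, 0 <= pi s a) s s' :
  0 <= Ppi P pi s s'.
Proof. by rewrite mxE; apply: sumr_ge0 => a _; apply: mulr_ge0. Qed.

Lemma Ppi_row1 (R : realType) n m (P : 'I_n -> 'I_m -> 'I_n -> R) (pi : 'M[R]_(n, m))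
  (hP1 : forall s a, \sum_(s' < n) P s a s' = 1)
  (hpi1 : forall s, \sum_(a < m) pi s a = 1) s :
  \sum_(s' < n) Ppi P pi s s' = 1.
Proof.
under eq_bigr do rewrite mxE.
rewrite exchange_big /=.
under eq_bigr do rewrite -mulr_sumr hP1 mulr1.
exact: hpi1.
Qed.

Lemma M_unit (R : realType) n m (P : 'I_n -> 'I_m -> 'I_n -> R) (pi : 'M[R]_(n, m))
  (gamma : R) (hP0 : forall s a s', 0 <= P s a s')
  (hP1 : forall s a, \sum_(s' < n) P s a s' = 1)
  (hg0 : 0 <= gamma) (hg1 : gamma < 1)
  (hpi0 : forall s a, 0 <= pi s a) (hpi1 : forall s, \sum_(a < m) pi s a = 1) :
  (1%:M - gamma *: Ppi P pi) \in unitmx.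
Proof.
rewrite -row_free_unit; apply: inj_row_free => v hv.
have e : v = gamma *: (v *m Ppi P pi).
  by apply: subr0_eq; rewrite -hv mulmxBr mulmx1 scalemxAr.
have e' : forall s', v 0 s' = gamma * \sum_(s < n) v 0 s * Ppi P pi s s'.
  by move=> s'; rewrite {1}e !mxE.
have hle : \sum_(s' < n) `|v 0 s'| <= gamma * \sum_(s < n) `|v 0 s|.
  apply: (@le_trans _ _ (\sum_(s' < n) gamma * \sum_(s < n) `|v 0 s| * Ppi P pi s s')).
    apply: ler_sum => s' _; rewrite e' normrM ger0_norm //.
    apply: ler_wpM2l => //; apply: (le_trans (ler_norm_sum _ _ _)).
    apply: ler_sum => s _; rewrite normrM (ger0_norm (@Ppi_ge0 _ _ _ _ _ hP0 hpi0 s s')) //.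
  rewrite -mulr_sumr exchange_big /=; apply: ler_wpM2l => //.
  apply: ler_sum => s _; rewrite -mulr_sumr (@Ppi_row1 _ _ _ _ _ hP1 hpi1) mulr1 //.
have h0 : 0 <= \sum_(s < n) `|v 0 s| by apply: sumr_ge0 => *.
have : (1 - gamma) * \sum_(s < n) `|v 0 s| <= 0 by lra.
rewrite pmulr_rle0 ?subr_gt0 // => hz0.
have hz : \sum_(s < n) `|v 0 s| = 0 by lra.
apply/rowP => j; rewrite mxE.
apply/normr0_eq0.
exact: (psumr_eq0P (fun i _ => normr_ge0 (v 0 i)) hz).
Qed.

Lemma dS_eq (R : realType) n m (P : 'I_n -> 'I_m -> 'I_n -> R) (pi : 'M[R]_(n, m))
  (gamma : R) (mu : 'rV[R]_n) (hP0 : forall s a s', 0 <= P s a s')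
  (hP1 : forall s a, \sum_(s' < n) P s a s' = 1)
  (hg0 : 0 <= gamma) (hg1 : gamma < 1)
  (hpi0 : forall s a, 0 <= pi s a) (hpi1 : forall s, \sum_(a < m) pi s a = 1) s' :
  dS P gamma mu pi 0 s' =
    mu 0 s' + gamma * \sum_(s < n) dS P gamma mu pi 0 s * Ppi P pi s s'.
Proof.
have hu := @M_unit _ _ _ _ _ _ hP0 hP1 hg0 hg1 hpi0 hpi1.
have : dS P gamma mu pi *m (1%:M - gamma *: Ppi P pi) = mu.
  by rewrite /dS -mulmxA mulVmx // mulmx1.
rewrite mulmxBr mulmx1 -scalemxAr => h.
move/matrixP/(_ 0 s'): h; rewrite !mxE => h'.
lra.
Qed.

Lemma dS_gt0 (R : realType) n m (P : 'I_n -> 'I_m -> 'I_n -> R) (pi : 'M[R]_(n, m))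
  (gamma : R) (mu : 'rV[R]_n) (hP0 : forall s a s', 0 <= P s a s')
  (hP1 : forall s a, \sum_(s' < n) P s a s' = 1)
  (hg0 : 0 <= gamma) (hg1 : gamma < 1)
  (hmu0 : forall s, 0 < mu 0 s)
  (hpi0 : forall s a, 0 <= pi s a) (hpi1 : forall s, \sum_(a < m) pi s a = 1) s :
  0 < dS P gamma mu pi 0 s.
Proof.
set d := dS P gamma mu pi 0.
have de := @dS_eq _ _ _ _ _ _ mu hP0 hP1 hg0 hg1 hpi0 hpi1.
have Pp0 := @Ppi_ge0 _ _ _ _ _ hP0 hpi0.
have Pp1 := @Ppi_row1 _ _ _ _ _ hP1 hpi1.
have dge0 : forall s, 0 <= d s.
  set T := \sum_(s' < n | d s' < 0) d s'.
  have T1 : T = \sum_(s' < n | d s' < 0) mu 0 s' +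
      gamma * \sum_(s < n) d s * \sum_(s' < n | d s' < 0) Ppi P pi s s'.
    rewrite /T (eq_bigr _ (fun s' _ => de s')) big_split /= -mulr_sumr.
    congr (_ + gamma * _); rewrite exchange_big /=.
    by apply: eq_bigr => i _; rewrite mulr_sumr.
  have T2 : 0 <= \sum_(s' < n | d s' < 0) mu 0 s'.
    by apply: sumr_ge0 => i _; apply: ltW.
  have T3 : T <= \sum_(s < n) d s * \sum_(s' < n | d s' < 0) Ppi P pi s s'.
    rewrite /T big_mkcond /=; apply: ler_sum => i _.
    have w0 : 0 <= \sum_(s' < n | d s' < 0) Ppi P pi i s' by apply: sumr_ge0.
    have w1 : \sum_(s' < n | d s' < 0) Ppi P pi i s' <= 1.
      rewrite -(Pp1 i) [X in _ <= X](bigID (fun s' => d s' < 0)) /= lerDl.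
      by apply: sumr_ge0.
    case: ifPn => hi; first nra.
    rewrite -leNgt in hi; exact: mulr_ge0.
  have T4 : T <= 0 by apply: sumr_le0 => i /ltW.
  have T5 : 0 <= T.
    have : (1 - gamma) * T >= 0 by nra.
    by rewrite pmulr_rge0 // subr_gt0.
  move=> s0; rewrite leNgt; apply/negP => hs0.
  have : T <= d s0.
    rewrite /T (bigD1 s0) //= -[leRHS]addr0 lerD2l.
    by apply: sumr_le0 => i /andP[/ltW].
  lra.
rewrite /d de; apply: (lt_le_trans (hmu0 s)); rewrite lerDl.
by apply: mulr_ge0 => //; apply: sumr_ge0 => i _; apply: mulr_ge0.
Qed.
Lemma pairE (R : realType) n m (F : 'I_n -> 'I_m -> R) :
  \sum_(i < n) \sum_(j < m) F i j = \sum_(k : 'I_n * 'I_m) F k.1 k.2.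
Proof. by rewrite pair_big. Qed.

Lemma powR_divl (R : realType) (x y r : R) : 0 <= x -> 0 < y ->
  (x / y) `^ r = x `^ r / y `^ r.
Proof.
move=> x0 y0; rewrite powRM // ?invr_ge0 ?ltW //; congr (_ * _).
by rewrite -powR_inv1 ?ltW // -powRrM mulN1r powRN.
Qed.

Arguments powR_divl {R}.
Arguments pairE {R n m}.

Definition rho' (R : realType) n m (d Rw : 'M[R]_(n, m)) : R :=
  \sum_(s < n) \sum_(a < m) d s a * Rw s a.

Arguments rho' {R n m}.

Lemma holder_min (R : realType) n m (p q alpha : R) (R0 d : 'M[R]_(n, m)) :
  1 < p -> q = p / (p - 1) -> 0 < alpha -> (forall i j, 0 <= d i j) ->
  0 < Lpnorm q d ->
  forall Rw, Lpnorm p (Rw - R0) <= alpha ->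
  rho' d R0 - alpha * Lpnorm q d <= rho' d Rw /\
  (rho' d Rw <= rho' d R0 - alpha * Lpnorm q d ->
   Rw = \matrix_(i, j) (R0 i j - alpha * (d i j / Lpnorm q d) `^ (q - 1))).
Proof.
move=> p1 qE a0 d0 L0 Rw hball.
set L := Lpnorm q d in L0 *.
have p0 : 0 < p by lra.
have pm1 : p - 1 != 0 by rewrite subr_eq0 gt_eqF.
have q1 : 1 < q by rewrite qE ltr_pdivlMr ?subr_gt0 //; lra.
have q0 : 0 < q by lra.
have hpq : q^-1 + p^-1 = 1 by rewrite qE; field; rewrite pm1 gt_eqF.
set Sq := \sum_(i < n) \sum_(j < m) `|d i j| `^ q.
have Sq0 : 0 <= Sq by apply: sumr_ge0 => i _; apply: sumr_ge0 => j _; apply: powR_ge0.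
have LSq : L `^ q = Sq by rewrite /L /Lpnorm -/Sq -powRrM mulVf ?gt_eqF // powRr1.
have Sqp : 0 < Sq.
  rewrite lt_neqAle Sq0 andbT; apply/negP => /eqP h.
  by move: L0; rewrite /L /Lpnorm -/Sq -h powR0 ?invr_eq0 ?gt_eqF // ltxx.
pose x (k : 'I_n * 'I_m) := d k.1 k.2 / L.
have hx : \sum_k x k `^ q = 1.
  rewrite /x; under eq_bigr => k _ do rewrite powR_divl // LSq -(ger0_norm (d0 k.1 k.2)).
  by rewrite -mulr_suml -(pairE (fun i j => `|d i j| `^ q)) -/Sq mulfV ?gt_eqF.
set Sp := \sum_(i < n) \sum_(j < m) `|(Rw - R0) i j| `^ p.
have Sp0 : 0 <= Sp by apply: sumr_ge0 => i _; apply: sumr_ge0 => j _; apply: powR_ge0.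
have hSp : Sp <= alpha `^ p.
  have := @ge0_ler_powR _ p (ltW p0) (Sp `^ p^-1) alpha.
  rewrite !nnegrE powR_ge0 (ltW a0) -powRrM mulVf ?gt_eqF // powRr1 //.
  by apply.
have Ap : 0 < alpha `^ p by apply: powR_gt0.
pose y (k : 'I_n * 'I_m) := - (Rw k.1 k.2 - R0 k.1 k.2) / alpha.
have hy : \sum_k `|y k| `^ p <= 1.
  have -> : \sum_k `|y k| `^ p = Sp / alpha `^ p.
    rewrite /Sp pairE mulr_suml; apply: eq_bigr => k _.
    by rewrite /y normrM normrN normfV (gtr0_norm a0) powR_divl // !mxE.
  by rewrite ler_pdivrMr // mul1r.
have hxy : \sum_k x k * y k = - (rho' d Rw - rho' d R0) / (alpha * L).
  rewrite /rho' !pairE -sumrB -sumrN mulr_suml; apply: eq_bigr => k _.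
  rewrite /x /y; field; rewrite ?gt_eqF //.
have Y := fun k => @young_eq _ p q (x k) (y k) p1 qE (divr_ge0 (d0 k.1 k.2) (ltW L0)).
have hsum : \sum_k (x k `^ q / q + `|y k| `^ p / p) <= 1.
  rewrite big_split /= -!mulr_suml.
  rewrite hx; have pi0 : 0 < p^-1 by rewrite invr_gt0.
  nra.
have hsxy : \sum_k x k * y k <= 1.
  apply: le_trans hsum; apply: ler_sum => k _; exact: (Y k).1.
have aL : 0 < alpha * L by apply: mulr_gt0.
split.
  move: hsxy; rewrite hxy ler_pdivrMr // mul1r; lra.
move=> hle.
have hge : 1 <= \sum_k x k * y k.
  by rewrite hxy ler_pdivlMr // mul1r; lra.
have hg : \sum_k ((x k `^ q / q + `|y k| `^ p / p) - x k * y k) = 0.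
  apply/eqP; rewrite eq_le sumr_ge0 ?andbT; last first.
    by move=> k _; rewrite subr_ge0; exact: (Y k).1.
  by rewrite sumrB; lra.
apply/matrixP => i j; rewrite mxE.
have gnn : forall k : 'I_n * 'I_m, true ->
    0 <= (x k `^ q / q + `|y k| `^ p / p) - x k * y k.
  by move=> k _; rewrite subr_ge0; exact: (Y k).1.
have := psumr_eq0P gnn hg (i:=(i, j)) isT.
move=> h0; have hyx := (Y (i, j)).2 (ltac:(lra)).
rewrite /y /x /= in hyx; rewrite -hyx.
field; rewrite gt_eqF //.
Qed.

Lemma star_ok (R : realType) n m (p q alpha : R) (R0 d : 'M[R]_(n, m)) :
  1 < p -> q = p / (p - 1) -> 0 < alpha -> (forall i j, 0 <= d i j) ->
  0 < Lpnorm q d ->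
  let Rs := \matrix_(i, j) (R0 i j - alpha * (d i j / Lpnorm q d) `^ (q - 1)) in
  Lpnorm p (Rs - R0) <= alpha /\ rho' d Rs = rho' d R0 - alpha * Lpnorm q d.
Proof.
move=> p1 qE a0 d0 L0 Rs.
set L := Lpnorm q d in L0 Rs *.
have p0 : 0 < p by lra.
have pm1 : p - 1 != 0 by rewrite subr_eq0 gt_eqF.
have q1 : 1 < q by rewrite qE ltr_pdivlMr ?subr_gt0 //; lra.
have q0 : 0 < q by lra.
have qp : (q - 1) * p = q by rewrite qE; field; rewrite pm1.
set Sq := \sum_(i < n) \sum_(j < m) `|d i j| `^ q.
have Sq0 : 0 <= Sq by apply: sumr_ge0 => i _; apply: sumr_ge0 => j _; apply: powR_ge0.
have LSq : L `^ q = Sq by rewrite /L /Lpnorm -/Sq -powRrM mulVf ?gt_eqF // powRr1.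
have Sqp : 0 < Sq.
  rewrite lt_neqAle Sq0 andbT; apply/negP => /eqP h.
  by move: L0; rewrite /L /Lpnorm -/Sq -h powR0 ?invr_eq0 ?gt_eqF // ltxx.
pose x (k : 'I_n * 'I_m) := d k.1 k.2 / L.
have x0 : forall k, 0 <= x k by move=> k; apply: divr_ge0 => //; apply: ltW.
have hx : \sum_k x k `^ q = 1.
  rewrite /x; under eq_bigr => k _ do rewrite powR_divl // LSq -(ger0_norm (d0 k.1 k.2)).
  by rewrite -mulr_suml -(pairE (fun i j => `|d i j| `^ q)) -/Sq mulfV ?gt_eqF.
split.
  rewrite /Lpnorm pairE.
  have -> : \sum_k `|(Rs - R0) k.1 k.2| `^ p = alpha `^ p.
    rewrite -[RHS]mulr1 -hx mulr_sumr; apply: eq_bigr => k _.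
    rewrite !mxE addrAC subrr add0r normrN normrM (gtr0_norm a0).
    rewrite ger0_norm ?powR_ge0 // (powRM _ (ltW a0) (powR_ge0 _ _)).
    by rewrite -powRrM qp.
  by rewrite -powRrM mulfV ?gt_eqF // powRr1 // ltW.
rewrite /rho' !pairE -[X in _ - alpha * X]mulr1 -hx !mulr_sumr -sumrB.
apply: eq_bigr => k _; rewrite !mxE.
rewrite -(@mulr_powRB1 _ (x k) q (x0 k) q0).
rewrite /x.
field; rewrite gt_eqF //.
Qed.

Theorem corollary2 (R : realType) (n m : nat)
  (P : 'I_n -> 'I_m -> 'I_n -> R) (gamma : R) (mu : 'rV[R]_n)
  (hP0 : forall s a s', 0 <= P s a s')
  (hP1 : forall s a, \sum_(s' < n) P s a s' = 1)
  (hg0 : 0 <= gamma) (hg1 : gamma < 1)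
  (hmu0 : forall s, 0 < mu 0 s) (hmu1 : \sum_(s < n) mu 0 s = 1)
  (p : R) (hp : 1 < p) (R0 : 'M[R]_(n, m)) (alpha : R) (halpha : 0 < alpha)
  (pi : 'M[R]_(n, m))
  (hpi0 : forall s a, 0 <= pi s a) (hpi1 : forall s, \sum_(a < m) pi s a = 1)
  (s : 'I_n) (a : 'I_m) :
  let q := p / (p - 1) in
  let Rp := Rworst P gamma mu pi p alpha R0 in
  let d := dSA P gamma mu pi in
  Qpi P gamma pi Rp s a =
    R0 s a + gamma * \sum_(s' < n) P s a s' * vpi P gamma pi Rp s' 0
    - alpha * (d s a / Lpnorm q d) `^ (q - 1).
Proof.
move=> q Rp d.
have qE : q = p / (p - 1) by [].
have p0 : 0 < p by lra.
have pm1 : p - 1 != 0 by rewrite subr_eq0 gt_eqF.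
have q1 : 1 < q by rewrite qE ltr_pdivlMr ?subr_gt0 //; lra.
have q0 : 0 < q by lra.
have dSp := @dS_gt0 _ _ _ _ _ _ mu hP0 hP1 hg0 hg1 hmu0 hpi0 hpi1.
have dge0 : forall i j, 0 <= d i j.
  by move=> i j; rewrite /d /dSA mxE; apply: mulr_ge0 => //; apply: ltW.
have L0 : 0 < Lpnorm q d.
  apply: powR_gt0.
  have hs : \sum_(j < m) d s j <> 0.
    have -> : \sum_(j < m) d s j = dS P gamma mu pi 0 s.
      rewrite /d /dSA; under eq_bigr do rewrite mxE.
      by rewrite -mulr_sumr hpi1 mulr1.
    by apply/eqP; rewrite gt_eqF.
  have [a0 /andP[_ ha0]] := psumr_neq0P (fun j _ => dge0 s j) hs.
  rewrite pairE (bigD1 (s, a0)) //=.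
  apply: (@lt_le_trans _ _ (`|d s a0| `^ q)).
    by apply: powR_gt0; rewrite gtr0_norm.
  by rewrite lerDl; apply: sumr_ge0 => k _; apply: powR_ge0.
pose Rstar := \matrix_(i, j) (R0 i j - alpha * (d i j / Lpnorm q d) `^ (q - 1)).
have [Sb Sr] := @star_ok _ _ _ p q alpha R0 d hp qE halpha dge0 L0.
have W : is_worst_reward P gamma mu pi p alpha R0 Rstar.
  split; first exact: Sb.
  move=> Rw' hb.
  have := (@holder_min _ _ _ p q alpha R0 d hp qE halpha dge0 L0 Rw' hb).1.
  by rewrite -Sr.
have -> : Rp = Rstar.
  rewrite /Rp /Rworst; apply: (xget_unique _ W) => y [yb ymin].
  apply: (@holder_min _ _ _ p q alpha R0 d hp qE halpha dge0 L0 y yb).2.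
  rewrite -Sr; exact: ymin _ Sb.
rewrite /Qpi /Rstar mxE; ring.
Qed.
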